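(* Let $\phi\in\mathrm{Diff}(\mathbb C^2,0)$ with $\phi(\xi)=\Lambda\xi+\mathrm{h.o.t.}$ ($\Lambda=\mathrm{diag}(\lambda,\lambda^{-1})$ or $\Lambda=-\sigma$), such that $\phi^{\circ p}=\exp(\hat{\bm X})$ is tangent to the identity, $\phi$ is reversed by $\sigma$ (i.e. $\sigma\circ\phi\circ\sigma=\phi^{\circ(-1)}$) and has the first integral $h=\xi_1\xi_2$. Let $f:=\frac{\xi_1\circ\phi^{\circ p}-\xi_1}{\xi_1}$ and let $s\in\mathbb Z_{\geq0}$ be maximal such that $h^s$ divides $f$. Then $$\hat{\bm X}=\frac{f\log(1+\bm E.f)}{\bm E.f}\,\bm E\mod h^{-s}f^2\bm E.$$
   Context: $\sigma(\xi)=(\xi_2,\xi_1)$, $\bm E=\xi_1\frac{\partial}{\partial\xi_1}-\xi_2\frac{\partial}{\partial\xi_2}$, $\bm E.f$ is the derivative of $f$ along $\bm E$. $\hat{\bm X}$ is the formal infinitesimal generator of $\phi^{\circ p}$: the unique formal vector field with vanishing linear part whose formal time-1 flow $\exp(\hat{\bm X})$ equals the Taylor series of $\phi^{\circ p}$. $\frac{f\log(1+\bm E.f)}{\bm E.f}$ denotes the formal series $f\sum_{n\geq1}\frac{(-1)^{n-1}}{n}(\bm E.f)^{n-1}$. ''mod $h^{-s}f^2\bm E$'' means the difference is $g\,h^{-s}f^2\bm E$ for some formal series $g$. *)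

(* Defs.v *)
From HB Require Import structures.
From mathcomp Require Import all_boot all_order all_algebra.
From mathcomp Require Import complex.
From mathcomp Require Import Rstruct.
Set Implicit Arguments. Unset Strict Implicit. Unset Printing Implicit Defensive.
Import Order.TTheory GRing.Theory Num.Theory.
Local Open Scope ring_scope.

Section FPS.
Variable K : fieldType.

(* A formal power series  F = sum_{i,j} F i j * xi1^i * xi2^j. *)
Definition fps := nat -> nat -> K.

Definition fpsC (c : K) : fps := fun i j => if (i == 0%N) && (j == 0%N) then c else 0.
Definition fps1 : fps := fpsC 1.
Definition xi1 : fps := fun i j => if (i == 1%N) && (j == 0%N) then 1 else 0.
Definition xi2 : fps := fun i j => if (i == 0%N) && (j == 1%N) then 1 else 0.
Definition fadd (F G : fps) : fps := fun i j => F i j + G i j.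
Definition fopp (F : fps) : fps := fun i j => - F i j.
Definition fsub (F G : fps) : fps := fadd F (fopp G).
Definition fmul (F G : fps) : fps := fun i j =>
  \sum_(a < i.+1) \sum_(b < j.+1) F a b * G (i - a)%N (j - b)%N.
Definition fpow (F : fps) (n : nat) : fps := iter n (fmul F) fps1.

Definition d1 (F : fps) : fps := fun i j => F i.+1 j *+ i.+1.
Definition d2 (F : fps) : fps := fun i j => F i j.+1 *+ j.+1.

(* substitution F(P, Q) for P, Q without constant term
   (for such P, Q the terms with a + b > i + j do not contribute) *)
Definition fcomp (F P Q : fps) : fps := fun i j =>
  \sum_(a < (i + j).+1) \sum_(b < (i + j).+1) F a b * fmul (fpow P a) (fpow Q b) i j.

Definition fmap := (fps * fps)%type.
Definition mcomp (Phi Psi : fmap) : fmap :=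
  (fcomp Phi.1 Psi.1 Psi.2, fcomp Phi.2 Psi.1 Psi.2).
Definition midm : fmap := (xi1, xi2).
Definition msigma : fmap := (xi2, xi1).
Definition miter (p : nat) (Phi : fmap) : fmap := iter p (mcomp Phi) midm.

(* linear part of a map: Phi(xi) = [[a, b], [c, d]] xi + h.o.t. *)
Definition linpart (Phi : fmap) (a b c d : K) : Prop :=
  [/\ Phi.1 1%N 0%N = a, Phi.1 0%N 1%N = b, Phi.2 1%N 0%N = c & Phi.2 0%N 1%N = d].

Definition vfield := (fps * fps)%type.
Definition lie (X : vfield) (F : fps) : fps := fadd (fmul X.1 (d1 F)) (fmul X.2 (d2 F)).
Definition vanishing_linear_part (X : vfield) : Prop :=
  [/\ X.1 0%N 0%N = 0 /\ X.2 0%N 0%N = 0,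
      X.1 1%N 0%N = 0, X.1 0%N 1%N = 0, X.2 1%N 0%N = 0 & X.2 0%N 1%N = 0].
(* Lie series  exp(X).F = sum_n X^n.F / n!  ; for X of order >= 2 and F
   without constant term, X^n.F has order >= n+1, so the sum is finite
   coefficientwise *)
Definition lie_exp (X : vfield) (F : fps) : fps := fun i j =>
  \sum_(n < (i + j).+1) (n`!%:R)^-1 * iter n (lie X) F i j.
Definition fexp (X : vfield) : fmap := (lie_exp X xi1, lie_exp X xi2).

Definition Efield : vfield := (xi1, fopp xi2).
Definition Eder (F : fps) : fps := lie Efield F.

(* log(1 + G) / G := sum_{n >= 1} (-1)^(n-1)/n G^(n-1), for G(0) = 0 *)
Definition log1p_div (G : fps) : fps := fun i j =>
  \sum_(n < (i + j).+1) ((-1) ^+ n / (n.+1)%:R) * fpow G n i j.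

Definition fdvd (D F : fps) : Prop := exists g : fps, F = fmul D g.

End FPS.

Definition C := (Rdefinitions.R)[i].

(* a holomorphic germ at 0 is given by a convergent power series *)
Definition convergent (F : fps C) : Prop :=
  exists M r : C, 0 < r /\ forall i j, `|F i j| <= M * r ^+ (i + j).

Definition hfi : fps C := fmul (@xi1 C) (@xi2 C).

(* Main.v *)
Require Import Defs.
From HB Require Import structures.
From mathcomp Require Import all_boot all_order all_algebra.
From mathcomp Require Import complex.
From mathcomp Require Import Rstruct.
From mathcomp Require boolp.
From Stdlib Require Import FunctionalExtensionality Classical.
From mathcomp Require Import ring zify.
Import Order.TTheory GRing.Theory Num.Theory.
Local Open Scope ring_scope.
Set Implicit Arguments. Unset Strict Implicit. Unset Printing Implicit Defensive.

Section S.
Variable K : numFieldType.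
Local Notation fps := (fps K).

Lemma fpsE (F G : fps) : (forall i j, F i j = G i j) -> F = G.
Proof.
move=> H; apply: functional_extensionality => i.
apply: functional_extensionality => j; exact: H.
Qed.

Definition fz : fps := fun _ _ => 0.

Lemma tri0 (R : nmodType) (G : nat -> nat -> R) n :
  \sum_(a < n.+1) \sum_(c < a.+1) G c (a - c)%N =
  \sum_(c < n.+1) \sum_(d < (n - c).+1) G c d.
Proof.
elim: n => [|n IH]; first by rewrite !big_ord1 /= ?big_ord1.
rewrite big_ord_recr /= IH [RHS]big_ord_recr /= subnn big_ord1.
rewrite [X in _ = X + _](eq_bigr (fun c : 'I_n.+1 =>
   \sum_(d < (n - c).+1) G c d + G c (n.+1 - c)%N)); last first.
  move=> c _; have cn : (c <= n)%N by rewrite -ltnS.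
  by rewrite subSn // big_ord_recr.
rewrite big_split /= -addrA; congr (_ + _).
by rewrite big_ord_recr /= subnn.
Qed.

Lemma tri (g : nat -> nat -> nat -> K) n :
  \sum_(a < n.+1) \sum_(c < a.+1) g c (a - c)%N (n - a)%N =
  \sum_(c < n.+1) \sum_(d < (n - c).+1) g c d (n - c - d)%N.
Proof.
rewrite -(tri0 (fun c d => g c d (n - c - d)%N)).
apply: eq_bigr => a _; apply: eq_bigr => c _.
by rewrite -subnDA subnKC // -ltnS.
Qed.


Lemma sum_rev n (f : nat -> K) :
  \sum_(a < n.+1) f a = \sum_(a < n.+1) f (n - a)%N.
Proof.
rewrite (reindex_inj rev_ord_inj) /=; apply: eq_bigr => a _.
by rewrite subSS.
Qed.

Lemma faddA : associative (@fadd K).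
Proof. by move=> F G H; apply: fpsE => i j; rewrite /fadd addrA. Qed.
Lemma faddC : commutative (@fadd K).
Proof. by move=> F G; apply: fpsE => i j; rewrite /fadd addrC. Qed.
Lemma fadd0 : left_id fz (@fadd K).
Proof. by move=> F; apply: fpsE => i j; rewrite /fadd add0r. Qed.
Lemma faddN : left_inverse fz (@fopp K) (@fadd K).
Proof. by move=> F; apply: fpsE => i j; rewrite /fadd /fopp addNr. Qed.

Lemma fmulC : commutative (@fmul K).
Proof.
move=> F G; apply: fpsE => i j; rewrite /fmul.
rewrite (sum_rev i (fun a => \sum_(b < j.+1) F a b * G (i - a)%N (j - b)%N)).
apply: eq_bigr => a _.
rewrite (sum_rev j (fun b => F (i - a)%N b * G (i - (i - a))%N (j - b)%N)).
apply: eq_bigr => b _.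
have ai : (a <= i)%N by rewrite -ltnS.
have bj : (b <= j)%N by rewrite -ltnS.
by rewrite (subKn ai) (subKn bj) mulrC.
Qed.

Lemma fmulA : associative (@fmul K).
Proof.
move=> F G H; apply: fpsE => i j; symmetry; rewrite /fmul.
transitivity (\sum_(a < i.+1) \sum_(c < a.+1)
  (fun c a' i' => \sum_(b < j.+1) \sum_(d < b.+1) F c d * G a' (b - d)%N * H i' (j - b)%N)
   c (a - c)%N (i - a)%N).
  apply: eq_bigr => a _.
  rewrite (eq_bigr (fun b : 'I_j.+1 => \sum_(c < a.+1) \sum_(d < b.+1)
     F c d * G (a - c)%N (b - d)%N * H (i - a)%N (j - b)%N)); last first.
    by move=> b _ /=; rewrite mulr_suml; apply: eq_bigr => c _; rewrite mulr_suml.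
  by rewrite exchange_big.
rewrite (tri (fun c a' i' => \sum_(b < j.+1) \sum_(d < b.+1) F c d * G a' (b - d)%N * H i' (j - b)%N)).
apply: eq_bigr => c _.
transitivity (\sum_(d < j.+1) \sum_(a' < (i - c).+1) \sum_(b' < (j - d).+1)
   F c d * G a' b' * H (i - c - a')%N (j - d - b')%N); last first.
  apply: eq_bigr => d _; rewrite mulr_sumr; apply: eq_bigr => a' _.
  by rewrite mulr_sumr; apply: eq_bigr => b' _; rewrite mulrA.
rewrite [RHS]exchange_big; apply: eq_bigr => a' _.
exact: (tri (fun d b' j' => F c d * G a' b' * H (i - c - a')%N j')).
Qed.

Lemma fmul1 : left_id (@fps1 K) (@fmul K).
Proof.
move=> F; apply: fpsE => i j; rewrite /fmul big_ord_recl [X in _ + X]big1 ?addr0; last first.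
  by move=> a _; apply: big1 => b _; rewrite /fps1 /fpsC /= mul0r.
rewrite big_ord_recl [X in _ + X]big1 ?addr0; last first.
  by move=> b _; rewrite /fps1 /fpsC /= mul0r.
by rewrite /fps1 /fpsC /= mul1r !subn0.
Qed.

Lemma fmulDl : left_distributive (@fmul K) (@fadd K).
Proof.
move=> F G H; apply: fpsE => i j; rewrite /fmul /fadd -big_split /=.
by apply: eq_bigr => a _; rewrite -big_split; apply: eq_bigr => b _; rewrite mulrDl.
Qed.

Lemma fps1_neq0 : (@fps1 K) <> fz.
Proof. move=> /(congr1 (fun F => F 0%N 0%N)); rewrite /fps1 /fpsC /fz /=. exact/eqP/oner_neq0. Qed.


HB.instance Definition _ := boolp.gen_eqMixin (Defs.fps K).
HB.instance Definition _ := boolp.gen_choiceMixin (Defs.fps K).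
HB.instance Definition _ := GRing.isZmodule.Build (Defs.fps K) faddA faddC fadd0 faddN.
Lemma fps1_neq0b : (@fps1 K) != fz. Proof. exact/eqP/fps1_neq0. Qed.
HB.instance Definition _ := GRing.Zmodule_isComNzRing.Build (Defs.fps K) fmulA fmulC fmul1 fmulDl fps1_neq0b.

End S.

Section S2.
Variable K : numFieldType.
Local Notation fps := (Defs.fps K).
Local Notation x1 := (xi1 K).
Local Notation x2 := (xi2 K).

Lemma coefD (F G : fps) i j : (F + G) i j = F i j + G i j. Proof. by []. Qed.
Lemma coefN (F : fps) i j : (- F) i j = - F i j. Proof. by []. Qed.
Lemma coefB (F G : fps) i j : (F - G) i j = F i j - G i j. Proof. by []. Qed.
Lemma coef0 i j : (0 : fps) i j = 0. Proof. by []. Qed.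
Lemma coefM (F G : fps) i j : (F * G) i j =
  \sum_(a < i.+1) \sum_(b < j.+1) F a b * G (i - a)%N (j - b)%N.
Proof. by []. Qed.
Lemma coef_sum I (r : seq I) (P : pred I) (F : I -> fps) i j :
  (\sum_(k <- r | P k) F k) i j = \sum_(k <- r | P k) F k i j.
Proof. by elim/big_rec2: _ => // k a b _ <-. Qed.
Lemma coefC c i j : (fpsC c : fps) i j = if (i == 0%N) && (j == 0%N) then c else 0.
Proof. by []. Qed.

Lemma coefCM c (F : fps) i j : (fpsC c * F) i j = c * F i j.
Proof.
rewrite coefM big_ord_recl [X in _ + X]big1 ?addr0; last first.
  by move=> a _; apply: big1 => b _; rewrite coefC /= mul0r.
rewrite big_ord_recl [X in _ + X]big1 ?addr0; last first.
  by move=> b _; rewrite coefC /= mul0r.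
by rewrite coefC /= !subn0.
Qed.

Lemma fpsC_mul c d : fpsC (c * d) = fpsC c * fpsC d :> fps.
Proof.
apply: fpsE => i j; rewrite coefCM !coefC.
by case: ((i == 0%N) && (j == 0%N)); rewrite ?mulr0.
Qed.
Lemma fpsC_add c d : fpsC (c + d) = fpsC c + fpsC d :> fps.
Proof.
apply: fpsE => i j; rewrite coefD !coefC.
by case: ((i == 0%N) && (j == 0%N)); rewrite ?addr0.
Qed.
Lemma fpsC0 : fpsC 0 = 0 :> fps.
Proof. by apply: fpsE => i j; rewrite coefC; case: (_ && _). Qed.
Lemma fpsC1 : fpsC 1 = 1 :> fps.
Proof. by []. Qed.
Lemma coef1 i j : (1 : fps) i j = if (i == 0%N) && (j == 0%N) then 1 else 0.
Proof. by []. Qed.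

Lemma coefx1M (F : fps) i j : (x1 * F) i j = if i is i'.+1 then F i' j else 0.
Proof.
rewrite coefM; case: i => [|i].
  by rewrite big_ord1 big1 // => b _; rewrite /xi1 /= mul0r.
rewrite big_ord_recl big1 ?add0r; last by move=> b _; rewrite /xi1 /= mul0r.
rewrite big_ord_recl [X in _ + X]big1 ?addr0; last first.
  by move=> a _; apply: big1 => b _; rewrite /xi1 /= mul0r.
rewrite big_ord_recl [X in _ + X]big1 ?addr0; last first.
  by move=> b _; rewrite /xi1 /= mul0r.
by rewrite /xi1 /= mul1r !subn0 subn1.
Qed.

Lemma coefx2M (F : fps) i j : (x2 * F) i j = if j is j'.+1 then F i j' else 0.
Proof.
rewrite coefM big_ord_recl [X in _ + X]big1 ?addr0; last first.
  by move=> a _; apply: big1 => b _; rewrite /xi2 /= mul0r.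
case: j => [|j].
  by rewrite big_ord1 /xi2 /= mul0r.
rewrite big_ord_recl /xi2 /= mul0r add0r.
rewrite big_ord_recl [X in _ + X]big1 ?addr0; last first.
  by move=> b _; rewrite /= mul0r.
by rewrite /= mul1r !subn0 subn1.
Qed.

Lemma x1_cancel (F G : fps) : x1 * F = x1 * G -> F = G.
Proof.
move=> E; apply: fpsE => i j.
by move: (congr1 (fun H => H i.+1 j) E); rewrite !coefx1M.
Qed.

Definition ordge (F : fps) k := forall i j, (i + j < k)%N -> F i j = 0.

Lemma ordge0 (F : fps) : ordge F 0.
Proof. by []. Qed.
Lemma ordgeW (F : fps) k l : (l <= k)%N -> ordge F k -> ordge F l.
Proof. by move=> lk H i j ij; apply: H; apply: leq_trans lk. Qed.
Lemma ordgeD (F G : fps) k : ordge F k -> ordge G k -> ordge (F + G) k.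
Proof. by move=> HF HG i j ij; rewrite coefD HF ?HG ?addr0. Qed.
Lemma ordgeN (F : fps) k : ordge F k -> ordge (- F) k.
Proof. by move=> HF i j ij; rewrite coefN HF ?oppr0. Qed.
Lemma ordgeB (F G : fps) k : ordge F k -> ordge G k -> ordge (F - G) k.
Proof. by move=> HF HG; apply: ordgeD => //; apply: ordgeN. Qed.
Lemma ordgez k : ordge (0 : fps) k.
Proof. by []. Qed.
Lemma ordgeM (F G : fps) k l : ordge F k -> ordge G l -> ordge (F * G) (k + l).
Proof.
move=> HF HG i j ij; rewrite coefM; apply: big1 => a _; apply: big1 => b _.
have [ab|ab] := ltnP (a + b) k; first by rewrite HF ?mul0r.
rewrite HG ?mulr0 //.
have ai : (a <= i)%N by rewrite -ltnS.
have bj : (b <= j)%N by rewrite -ltnS.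
lia.
Qed.

Lemma fpowE (F : fps) n : fpow F n = F ^+ n.
Proof. by elim: n => // n IH; rewrite exprS -IH. Qed.

Lemma ordgeX (F : fps) k n : ordge F k -> ordge (F ^+ n) (k * n).
Proof.
move=> HF; elim: n => [|n IH]; first by rewrite muln0.
by rewrite exprS mulnS; apply: ordgeM.
Qed.

Lemma ordge_x1 : ordge x1 1.
Proof. by move=> [|i] [|j]. Qed.
Lemma ordge_x2 : ordge x2 1.
Proof. by move=> [|i] [|j]. Qed.

Lemma d1D (F G : fps) : d1 (F + G) = d1 F + d1 G.
Proof. by apply: fpsE => i j; rewrite /d1 coefD mulrnDl. Qed.
Lemma d1N (F : fps) : d1 (- F) = - d1 F.
Proof. by apply: fpsE => i j; rewrite /d1 coefN mulNrn. Qed.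
Lemma d1B (F G : fps) : d1 (F - G) = d1 F - d1 G.
Proof. by rewrite d1D d1N. Qed.
Lemma d1C c : d1 (fpsC c) = 0 :> fps.
Proof. by apply: fpsE => i j; rewrite /d1 coefC /= mul0rn. Qed.
Lemma d11 : d1 1 = 0 :> fps.
Proof. exact: d1C. Qed.
Lemma d1x1 : d1 x1 = 1.
Proof. by apply: fpsE => [[|i]] [|j]; rewrite /d1 /xi1 /= ?mul0rn. Qed.
Lemma d1x2 : d1 x2 = 0.
Proof. by apply: fpsE => i j; rewrite /d1 /xi2 /= mul0rn. Qed.

Lemma d1M (F G : fps) : d1 (F * G) = d1 F * G + F * d1 G.
Proof.
apply: fpsE => i j; rewrite coefD /d1 coefM -sumrMnl.
transitivity (\sum_(a < i.+2) \sum_(b < j.+1)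
   ((F a b * G (i.+1 - a)%N (j - b)%N) *+ a + (F a b * G (i.+1 - a)%N (j - b)%N) *+ (i.+1 - a))).
  apply: eq_bigr => a _; rewrite -sumrMnl; apply: eq_bigr => b _.
  by rewrite -mulrnDr subnKC // -ltnS.
rewrite (eq_bigr (fun a : 'I_i.+2 => \sum_(b < j.+1) (F a b * G (i.+1 - a)%N (j - b)%N) *+ a +
   \sum_(b < j.+1) (F a b * G (i.+1 - a)%N (j - b)%N) *+ (i.+1 - a))); last first.
  by move=> a _; rewrite big_split.
rewrite big_split /=; congr (_ + _).
  rewrite big_ord_recl /= big1 ?add0r; last by move=> b _; rewrite mulr0n.
  rewrite coefM; apply: eq_bigr => a _; apply: eq_bigr => b _.
  by rewrite /bump /= add1n subSS mulrnAl.
rewrite big_ord_recr /= [X in _ + X]big1 ?addr0; last by move=> b _; rewrite subnn mulr0n.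
rewrite coefM; apply: eq_bigr => a _; apply: eq_bigr => b _.
have ai : (a <= i)%N by rewrite -ltnS.
by rewrite subSn // mulrnAr.
Qed.

Definition swap (F : fps) : fps := fun i j => F j i.
Lemma swapK (F : fps) : swap (swap F) = F. Proof. by []. Qed.
Lemma swapD (F G : fps) : swap (F + G) = swap F + swap G. Proof. by []. Qed.
Lemma swapN (F : fps) : swap (- F) = - swap F. Proof. by []. Qed.
Lemma swapM (F G : fps) : swap (F * G) = swap F * swap G.
Proof. by apply: fpsE => i j; rewrite /swap !coefM exchange_big. Qed.
Lemma swap1 : swap 1 = 1.
Proof. by apply: fpsE => i j; rewrite /swap !coef1 andbC. Qed.
Lemma swapx1 : swap x1 = x2.
Proof. by apply: fpsE => i j; rewrite /swap /xi1 /xi2 andbC. Qed.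
Lemma swapx2 : swap x2 = x1.
Proof. by apply: fpsE => i j; rewrite /swap /xi1 /xi2 andbC. Qed.
Lemma d2_swap (F : fps) : d2 F = swap (d1 (swap F)). Proof. by []. Qed.

Lemma d2D (F G : fps) : d2 (F + G) = d2 F + d2 G.
Proof. by rewrite !d2_swap swapD d1D swapD. Qed.
Lemma d2N (F : fps) : d2 (- F) = - d2 F.
Proof. by rewrite !d2_swap swapN d1N swapN. Qed.
Lemma d2B (F G : fps) : d2 (F - G) = d2 F - d2 G.
Proof. by rewrite d2D d2N. Qed.
Lemma d2M (F G : fps) : d2 (F * G) = d2 F * G + F * d2 G.
Proof. by rewrite !d2_swap swapM d1M swapD !swapM !swapK. Qed.
Lemma d2C c : d2 (fpsC c) = 0 :> fps.
Proof. by apply: fpsE => i j; rewrite /d2 coefC andbF /= mul0rn. Qed.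
Lemma d21 : d2 1 = 0 :> fps.
Proof. exact: d2C. Qed.
Lemma d2x1 : d2 x1 = 0.
Proof. by rewrite d2_swap swapx1 d1x2. Qed.
Lemma d2x2 : d2 x2 = 1.
Proof. by rewrite d2_swap swapx2 d1x1 swap1. Qed.

Lemma ordge_d1 (F : fps) k : ordge F k.+1 -> ordge (d1 F) k.
Proof. by move=> H i j ij; rewrite /d1 H ?mul0rn. Qed.
Lemma ordge_d2 (F : fps) k : ordge F k.+1 -> ordge (d2 F) k.
Proof. by move=> H i j ij; rewrite /d2 H ?mul0rn // addnS. Qed.

End S2.

Section S3.
Variable K : numFieldType.
Local Notation fps := (Defs.fps K).
Local Notation x1 := (xi1 K).
Local Notation x2 := (xi2 K).

Definition sums (Fn : nat -> fps) (S : fps) :=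
  exists c, forall i j N, (i + j + c < N)%N -> S i j = \sum_(n < N) Fn n i j.
Definition summable (Fn : nat -> fps) := forall n, ordge (Fn n) n.
Definition fsum (Fn : nat -> fps) : fps := fun i j => \sum_(n < (i + j).+1) Fn n i j.

Lemma sum_trunc (R : nmodType) m N (f : nat -> R) : (m <= N)%N ->
  (forall n, (m <= n)%N -> (n < N)%N -> f n = 0) ->
  \sum_(n < N) f n = \sum_(n < m) f n.
Proof.
elim: N => [|N IH]; first by rewrite leqn0 => /eqP ->.
rewrite leq_eqVlt => /orP [/eqP -> //|]; rewrite ltnS => mN H.
rewrite big_ord_recr /= H // addr0; apply: IH => // n mn nN.
by apply: H => //; apply: leqW.
Qed.

Lemma sums_fsum F : summable F -> sums F (fsum F).
Proof.
move=> HF; exists 0%N => i j N; rewrite addn0 => ijN.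
rewrite /fsum (@sum_trunc _ (i + j).+1 N (fun n => F n i j)) // => n ijn _.
by apply: HF.
Qed.

Lemma sums_unique F S T : sums F S -> sums F T -> S = T.
Proof.
move=> [c1 H1] [c2 H2]; apply: fpsE => i j.
rewrite (H1 i j (i + j + c1 + c2).+1) ?(H2 i j (i + j + c1 + c2).+1) //; lia.
Qed.

Lemma sums_ext F G S : (forall n, F n = G n) -> sums F S -> sums G S.
Proof. by move=> E; have -> : F = G by apply: functional_extensionality. Qed.

Lemma sums_eq F S T : S = T -> sums F S -> sums F T.
Proof. by move->. Qed.

Lemma sumsD F G S T : sums F S -> sums G T -> sums (fun n => F n + G n) (S + T).
Proof.
move=> [c1 H1] [c2 H2]; exists (c1 + c2)%N => i j N ijN.
rewrite coefD (H1 i j N) ?(H2 i j N); try lia.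
by rewrite -big_split.
Qed.

Lemma sumsN F S : sums F S -> sums (fun n => - F n) (- S).
Proof.
move=> [c H]; exists c => i j N ijN.
by rewrite coefN (H i j N) // -sumrN.
Qed.

Lemma sumsB F G S T : sums F S -> sums G T -> sums (fun n => F n - G n) (S - T).
Proof. by move=> HF HG; apply: sumsD => //; apply: sumsN. Qed.

Lemma sums0 : sums (fun _ => 0) 0.
Proof. by exists 0%N => i j N _; rewrite big1. Qed.

Lemma sumsMl G F S : sums F S -> sums (fun n => G * F n) (G * S).
Proof.
move=> [c H]; exists c => i j N ijN.
rewrite coefM.
transitivity (\sum_(a < i.+1) \sum_(b < j.+1) \sum_(n < N) G a b * F n (i - a)%N (j - b)%N).
  apply: eq_bigr => a _; apply: eq_bigr => b _.
  have ai : (a <= i)%N by rewrite -ltnS.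
  have bj : (b <= j)%N by rewrite -ltnS.
  rewrite (H _ _ N); last by lia.
  by rewrite mulr_sumr.
under eq_bigr => a _ do rewrite exchange_big.
rewrite exchange_big.
by apply: eq_bigr => n _; rewrite coefM.
Qed.

Lemma sumsMr G F S : sums F S -> sums (fun n => F n * G) (S * G).
Proof.
move=> H; rewrite mulrC; apply: (sums_ext _ (sumsMl G H)) => n; exact: mulrC.
Qed.

Lemma sums_shift F S : sums (fun n => F n.+1) S -> sums F (F 0%N + S).
Proof.
move=> [c H]; exists c.+1 => i j [|N] ijN; first by lia.
by rewrite big_ord_recl coefD (H i j N) //; lia.
Qed.

Lemma sums_unshift F S : sums F S -> sums (fun n => F n.+1) (S - F 0%N).
Proof.
move=> [c H]; exists c => i j N ijN.
rewrite coefB (H i j N.+1); last by lia.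
by rewrite big_ord_recl addrC addKr.
Qed.

Lemma sums_d1 F S : sums F S -> sums (fun n => d1 (F n)) (d1 S).
Proof.
move=> [c H]; exists c.+1 => i j N ijN.
rewrite /d1 (H i.+1 j N); last by lia.
by rewrite -sumrMnl.
Qed.

Lemma sums_swap F S : sums F S -> sums (fun n => swap (F n)) (swap S).
Proof.
move=> [c H]; exists c => i j N ijN.
by rewrite /swap (H j i N) //; lia.
Qed.

Lemma sums_d2 F S : sums F S -> sums (fun n => d2 (F n)) (d2 S).
Proof. by move=> H; exact: (sums_swap (sums_d1 (sums_swap H))). Qed.

Lemma summable_sums F S : summable F -> sums F S -> S = fsum F.
Proof. by move=> HF HS; apply: (sums_unique HS); apply: sums_fsum. Qed.

End S3.

Section S4.
Variable K : numFieldType.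
Local Notation fps := (Defs.fps K).
Local Notation x1 := (xi1 K).
Local Notation x2 := (xi2 K).

Lemma coef_sumo N (F : nat -> fps) i j :
  (\sum_(n < N) F n) i j = \sum_(n < N) F n i j.
Proof. exact: coef_sum. Qed.

Lemma telescope (r : fps) : ordge r 1 -> sums (fun n => r ^+ n - r ^+ n.+1) 1.
Proof.
move=> Hr; exists 0%N => i j N; rewrite addn0 => ijN.
rewrite -(coef_sumo N (fun n => r ^+ n - r ^+ n.+1)).
have -> : \sum_(n < N) (r ^+ n - r ^+ n.+1) = 1 - r ^+ N.
  elim: N {ijN} => [|N IH]; first by rewrite big_ord0 expr0 subrr.
  by rewrite big_ord_recr /= IH addrA subrK.
by rewrite coefB (@ordgeX _ r 1 N Hr i j) ?subr0 // mul1n.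
Qed.

Lemma summableX (r : fps) : ordge r 1 -> summable (fun n => r ^+ n).
Proof. by move=> Hr n; have := @ordgeX _ r 1 n Hr; rewrite mul1n. Qed.

Lemma fps_inv (w : fps) : w 0%N 0%N = 1 -> exists v, w * v = 1.
Proof.
move=> w0.
have Hr : ordge (1 - w) 1.
  move=> i j ij; have [-> ->] : i = 0%N /\ j = 0%N by lia.
  by rewrite coefB coef1 /= w0 subrr.
exists (fsum (fun n => (1 - w) ^+ n)).
have S1 := sums_fsum (summableX Hr).
have S2 := sumsMl w S1.
apply: (sums_unique S2); apply: (sums_ext _ (telescope Hr)) => n.
rewrite exprS; ring.
Qed.

Lemma sums_cauchy (A B : nat -> fps) : summable A -> summable B ->
  sums (fun n => \sum_(k < n.+1) A k * B (n - k)%N) (fsum A * fsum B).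
Proof.
move=> HA HB; exists 0%N => i j N; rewrite addn0 => ijN.
set M := (i + j)%N.
transitivity (\sum_(k < M.+1) \sum_(l < M.+1) (A k * B l) i j).
  rewrite coefM.
  transitivity (\sum_(a < i.+1) \sum_(b < j.+1) \sum_(k < M.+1) \sum_(l < M.+1)
       A k a b * B l (i - a)%N (j - b)%N).
    apply: eq_bigr => a _; apply: eq_bigr => b _.
    have ai : (a <= i)%N by rewrite -ltnS.
    have bj : (b <= j)%N by rewrite -ltnS.
    rewrite /fsum -(@sum_trunc _ (a + b).+1 M.+1 (fun k => A k a b)); last first.
      - by move=> n abn _; apply: HA.
      - by rewrite /M; lia.
    rewrite -(@sum_trunc _ (i - a + (j - b)).+1 M.+1 (fun k => B k (i - a)%N (j - b)%N)); last first.
      - by move=> n abn _; apply: HB.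
      - by rewrite /M; lia.
    rewrite mulr_suml; apply: eq_bigr => k _.
    by rewrite mulr_sumr.
  under eq_bigr => a _ do rewrite exchange_big.
  rewrite exchange_big; apply: eq_bigr => k _.
  under eq_bigr => a _ do rewrite exchange_big.
  rewrite exchange_big; apply: eq_bigr => l _.
  by rewrite coefM.
symmetry.
rewrite (@sum_trunc _ M.+1 N (fun n => (\sum_(k < n.+1) A k * B (n - k)%N) i j)); last first.
- move=> n Mn _; rewrite coef_sum; apply: big1 => k _.
  have kn : (k <= n)%N by rewrite -ltnS.
  apply: (@ordgeM _ _ _ k (n - k)%N) => //; rewrite subnKC //.
- by [].
under eq_bigr => n _ do rewrite coef_sum.
rewrite (tri0 (fun k l => (A k * B l) i j)).
apply: eq_bigr => k _.
rewrite (@sum_trunc _ (M - k).+1 M.+1 (fun l => (A k * B l) i j)) //.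
- by rewrite /M; lia.
- move=> l kl _; apply: (@ordgeM _ _ _ k l) => //; move: kl; have := ltn_ord k; rewrite /M; lia.
Qed.

End S4.

Section S5.
Variable K : numFieldType.
Local Notation fps := (Defs.fps K).
Local Notation x1 := (xi1 K).
Local Notation x2 := (xi2 K).

Record isder (D : fps -> fps) : Prop := Isder {
  derD : forall F G, D (F + G) = D F + D G;
  derM : forall F G, D (F * G) = D F * G + F * D G;
  derC : forall c, D (fpsC c) = 0;
  derS : forall F S, sums F S -> sums (fun n => D (F n)) (D S) }.

Section Der.
Variable D : fps -> fps.
Hypothesis HD : isder D.
Lemma der0 : D 0 = 0.
Proof. by rewrite -{1}fpsC0 (derC HD). Qed.
Lemma der1 : D 1 = 0.
Proof. by rewrite -fpsC1 (derC HD). Qed.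
Lemma derN F : D (- F) = - D F.
Proof. by apply: (@addrI _ (D F)); rewrite -(derD HD) !subrr der0. Qed.
Lemma derB F G : D (F - G) = D F - D G.
Proof. by rewrite (derD HD) derN. Qed.
Lemma derCM c F : D (fpsC c * F) = fpsC c * D F.
Proof. by rewrite (derM HD) (derC HD) mul0r add0r. Qed.
Lemma derX F n : D (F ^+ n.+1) = (F ^+ n * D F) *+ n.+1.
Proof.
elim: n => [|n IH]; first by rewrite expr1 expr0 mul1r.
rewrite exprS (derM HD) IH exprS.
ring.
Qed.
Lemma der_sum I (r : seq I) (P : pred I) (F : I -> fps) :
  D (\sum_(i <- r | P i) F i) = \sum_(i <- r | P i) D (F i).
Proof. exact: (big_morph D (derD HD) der0). Qed.
Lemma derMn F m : D (F *+ m) = D F *+ m.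
Proof.
elim: m => [|m IH]; first by rewrite !mulr0n der0.
by rewrite !mulrS (derD HD) IH.
Qed.
End Der.

Lemma isder_d1 : isder (@d1 K).
Proof. split; [exact: d1D | exact: d1M | exact: d1C | exact: sums_d1]. Qed.
Lemma isder_d2 : isder (@d2 K).
Proof. split; [exact: d2D | exact: d2M | exact: d2C | exact: sums_d2]. Qed.

Lemma EderE (F : fps) : Eder F = x1 * d1 F - x2 * d2 F.
Proof. by rewrite -mulNr. Qed.
Lemma lieE (X : vfield K) (F : fps) : lie X F = X.1 * d1 F + X.2 * d2 F.
Proof. by []. Qed.

Lemma isder_lie (X : vfield K) : isder (lie X).
Proof.
split.
- by move=> F G; rewrite !lieE d1D d2D; ring.
- by move=> F G; rewrite !lieE d1M d2M; ring.
- by move=> c; rewrite lieE d1C d2C; ring.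
- move=> F S HS; rewrite lieE.
  apply: (sums_ext _ (sumsD (sumsMl X.1 (sums_d1 HS)) (sumsMl X.2 (sums_d2 HS)))).
  by [].
Qed.

Lemma isder_E : isder (@Eder K).
Proof.
split.
- by move=> F G; rewrite !EderE d1D d2D; ring.
- by move=> F G; rewrite !EderE d1M d2M; ring.
- by move=> c; rewrite EderE d1C d2C; ring.
- move=> F S HS; rewrite EderE.
  apply: (sums_ext _ (sumsB (sumsMl x1 (sums_d1 HS)) (sumsMl x2 (sums_d2 HS)))).
  by move=> n; rewrite EderE.
Qed.

Lemma Ex1 : Eder x1 = x1.
Proof. by rewrite EderE d1x1 d2x1; ring. Qed.
Lemma Ex2 : Eder x2 = - x2.
Proof. by rewrite EderE d1x2 d2x2; ring. Qed.

Lemma ordge_E (F : fps) k : ordge F k -> ordge (Eder F) k.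
Proof.
case: k => [|k] HF; first exact: ordge0.
rewrite EderE; apply: ordgeB.
  by rewrite -add1n; apply: ordgeM; [exact: ordge_x1 | exact: ordge_d1].
by rewrite -add1n; apply: ordgeM; [exact: ordge_x2 | exact: ordge_d2].
Qed.

Lemma vanish_ord (X : vfield K) : vanishing_linear_part X -> ordge X.1 2 /\ ordge X.2 2.
Proof.
move=> [[h1 h2] h3 h4 h5 h6]; split => i j ij.
  by have [[-> ->]|[[-> ->]|[-> ->]]] : (i = 0 /\ j = 0 \/ i = 1 /\ j = 0 \/ i = 0 /\ j = 1)%N by lia.
by have [[-> ->]|[[-> ->]|[-> ->]]] : (i = 0 /\ j = 0 \/ i = 1 /\ j = 0 \/ i = 0 /\ j = 1)%N by lia.
Qed.

Lemma ordge_lie (X : vfield K) (F : fps) k : vanishing_linear_part X ->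
  ordge F k -> ordge (lie X F) k.+1.
Proof.
move=> /vanish_ord [H1 H2] HF; rewrite lieE.
case: k HF => [|k] HF.
  by apply: ordgeD; apply: (@ordgeW _ _ (2 + 0)%N) => //; apply: ordgeM.
by apply: ordgeD; rewrite -add2n; apply: ordgeM => //; [exact: ordge_d1 | exact: ordge_d2].
Qed.

Lemma ordge_iter (X : vfield K) (F : fps) k m : vanishing_linear_part X ->
  ordge F k -> ordge (iter m (lie X) F) (k + m).
Proof.
move=> HX HF; elim: m => [|m IH]; first by rewrite addn0.
by rewrite addnS; apply: ordge_lie.
Qed.

End S5.

Arguments lie : simpl never.
Arguments Eder : simpl never.
Arguments d1 : simpl never.
Arguments d2 : simpl never.

Section S6.
Variable K : numFieldType.
Local Notation fps := (Defs.fps K).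
Local Notation x1 := (xi1 K).
Local Notation x2 := (xi2 K).

Lemma coefMn (F : fps) m i j : (F *+ m) i j = F i j *+ m.
Proof. by elim: m => [|m IH]; rewrite ?mulr0n // !mulrS coefD IH. Qed.

Lemma fpsC_natmul (F : fps) m : F *+ m = fpsC (m%:R) * F.
Proof. by apply: fpsE => i j; rewrite coefMn coefCM mulr_natl. Qed.

Lemma fact_neq0 n : (n`!%:R : K) != 0.
Proof. by rewrite pnatr_eq0 -lt0n fact_gt0. Qed.

Lemma binfact_inv n k : (k <= n)%N ->
  (n`!%:R : K)^-1 * 'C(n, k)%:R = (k`!%:R)^-1 * ((n - k)`!%:R)^-1.
Proof.
move=> kn; have H := bin_fact kn.
have H' : ('C(n, k)%:R * (k`!%:R * (n - k)`!%:R) = n`!%:R :> K) by rewrite -!natrM H.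
rewrite -H'.
have h1 := fact_neq0 k; have h2 := fact_neq0 (n - k).
have h3 : ('C(n, k)%:R : K) != 0 by rewrite pnatr_eq0 -lt0n bin_gt0.
field.
by rewrite h1 h2 h3.
Qed.

Lemma iter_lieM (X : vfield K) n (F G : fps) :
  iter n (lie X) (F * G) =
  \sum_(k < n.+1) (iter k (lie X) F * iter (n - k) (lie X) G) *+ 'C(n, k).
Proof.
have HD := isder_lie X.
elim: n => [|n IH]; first by rewrite big_ord1 /= mulr1n.
rewrite iterS IH (der_sum HD).
under eq_bigr => k _ do rewrite (derMn HD) (derM HD).
under eq_bigr => k _ do rewrite mulrnDl.
rewrite big_split /=.
rewrite [RHS]big_ord_recl /= bin0 mulr1n.
under [in RHS]eq_bigr => k _ do rewrite /bump /= add1n add0n binS mulrnDr.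
rewrite big_split /= [RHS]addrA [RHS]addrC; congr (_ + _).
rewrite big_ord_recl /= bin0 mulr1n; congr (_ + _).
  by rewrite subn0.
rewrite [RHS]big_ord_recr /= bin_small // mulr0n addr0.
apply: eq_bigr => i _; rewrite /bump /= add1n add0n subSS.
have iln := ltn_ord i.
by rewrite -(subnSK iln).
Qed.

Definition ex (X : vfield K) (F : fps) n : fps := fpsC ((n`!%:R)^-1) * iter n (lie X) F.

Lemma lie_expE (X : vfield K) F : lie_exp X F = fsum (ex X F).
Proof. by apply: fpsE => i j; apply: eq_bigr => n _; rewrite /ex coefCM. Qed.

Lemma summable_ex (X : vfield K) F : vanishing_linear_part X -> summable (ex X F).
Proof.
move=> HX n; rewrite -[n]add0n; apply: ordgeM; first exact: ordge0.
by rewrite -[n in ordge _ n]add0n; apply: ordge_iter.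
Qed.

Lemma ex_mul (X : vfield K) F G n :
  ex X (F * G) n = \sum_(k < n.+1) ex X F k * ex X G (n - k)%N.
Proof.
rewrite /ex iter_lieM mulr_sumr; apply: eq_bigr => k _.
have kn : (k <= n)%N by rewrite -ltnS.
rewrite fpsC_natmul mulrA -fpsC_mul binfact_inv // fpsC_mul; ring.
Qed.

Lemma exp_mul (X : vfield K) F G : vanishing_linear_part X ->
  lie_exp X (F * G) = lie_exp X F * lie_exp X G.
Proof.
move=> HX; rewrite !lie_expE.
have S1 := sums_cauchy (summable_ex F HX) (summable_ex G HX).
apply: (sums_unique (sums_fsum (summable_ex (F * G) HX))).
by apply: (sums_ext _ S1) => n; rewrite ex_mul.
Qed.

End S6.

Section S7.
Variable K : numFieldType.
Local Notation fps := (Defs.fps K).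
Local Notation x1 := (xi1 K).
Local Notation x2 := (xi2 K).

Lemma lie_h0 (X : vfield K) : vanishing_linear_part X ->
  lie_exp X (x1 * x2) = x1 * x2 -> lie X (x1 * x2) = 0.
Proof.
move=> HX Hexp.
have Hh : ordge (x1 * x2) 2 := ordgeM (ordge_x1 K) (ordge_x2 K).
have Y3 : ordge (lie X (x1 * x2)) 3 := ordge_lie HX Hh.
have Yd : forall d, ordge (lie X (x1 * x2)) d.
  elim=> [|d IH]; first exact: ordge0.
  have [d3|d3] := ltnP d 3.
    by apply: (ordgeW _ Y3).
  move=> i j ij.
  have [ijd|ijd] := ltnP (i + j) d; first exact: IH.
  have Eij : (i + j = d)%N by lia.
  have := congr1 (fun F => F i j) Hexp.
  rewrite /lie_exp.
  have -> : (i + j).+1 = ((i + j).-2).+3 by lia.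
  rewrite big_ord_recl big_ord_recl.
  rewrite big1; last first.
    move=> n _; rewrite /bump /= add0n.
    have -> : lie X (lie X (iter n (lie X) (x1 * x2))) = iter n.+1 (lie X) (lie X (x1 * x2)).
      by rewrite iterS -iterSr.
    by rewrite (@ordge_iter _ X _ _ n.+1 HX IH i j) ?mulr0 //; lia.
  rewrite addr0 /= (_ : 0`! = 1)%N // (_ : (bump 0 0)`! = 1)%N // invr1 !mul1r => /eqP.
  rewrite -subr_eq0 addrC addrA addNr add0r => /eqP //.
apply: fpsE => i j; exact: (Yd (i + j).+1).
Qed.

Lemma X_decomp (X : vfield K) : vanishing_linear_part X -> lie X (x1 * x2) = 0 ->
  exists a : fps, ordge a 1 /\ X = (x1 * a, - (x2 * a)).
Proof.
move=> HX H0.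
have H1 : X.1 * x2 + X.2 * x1 = 0.
  by rewrite -H0 lieE d1M d2M d1x1 d1x2 d2x1 d2x2; ring.
exists (fun i j => X.1 i.+1 j); split.
  move=> i j ij; have [-> ->] : i = 0%N /\ j = 0%N by lia.
  by case: HX => _ h3 _ _ _; exact: h3.
have Hc : forall i j, (x2 * X.1) i j + (x1 * X.2) i j = 0.
  by move=> i j; rewrite [x2 * _]mulrC [x1 * _]mulrC -coefD H1.
clear H0; case: X HX H1 Hc => X1 X2 HX H1 Hc /=; congr pair; apply: fpsE => i j.
  rewrite coefx1M; case: i => [|i] //.
  by have := Hc 0%N j.+1; rewrite coefx2M coefx1M addr0.
rewrite coefN coefx2M; case: j => [|j].
  by have := Hc i.+1 0%N; rewrite coefx2M coefx1M add0r /= => ->; rewrite oppr0.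
have := Hc i.+1 j.+1; rewrite coefx2M coefx1M /= => /eqP; rewrite addr_eq0 => /eqP ->.
by rewrite opprK.
Qed.

End S7.

Section S8.
Variable K : numFieldType.
Local Notation fps := (Defs.fps K).
Local Notation x1 := (xi1 K).
Local Notation x2 := (xi2 K).

Lemma ordgeW2 (P Q : fps) a b : ordge P 1 -> ordge Q 1 -> ordge (P ^+ a * Q ^+ b) (a + b).
Proof.
move=> HP HQ; have := ordgeM (@ordgeX _ P 1 a HP) (@ordgeX _ Q 1 b HQ).
by rewrite !mul1n.
Qed.

Lemma fcompE (F P Q : fps) i j N : ordge P 1 -> ordge Q 1 -> (i + j < N)%N ->
  fcomp F P Q i j = \sum_(a < N) \sum_(b < N) F a b * (P ^+ a * Q ^+ b) i j.
Proof.
move=> HP HQ ijN; rewrite /fcomp.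
rewrite (@sum_trunc _ (i + j).+1 N (fun a => \sum_(b < N) F a b * (P ^+ a * Q ^+ b) i j)) //; last first.
  move=> a ija _; apply: big1 => b _.
  by rewrite (@ordgeW2 P Q a b HP HQ) ?mulr0 //; lia.
apply: eq_bigr => a _.
rewrite (@sum_trunc _ (i + j).+1 N (fun b => F a b * (P ^+ a * Q ^+ b) i j)) //; last first.
  by move=> b ijb _; rewrite (@ordgeW2 P Q a b HP HQ) ?mulr0 //; lia.
by apply: eq_bigr => b _; rewrite !fpowE.
Qed.

Lemma coefM_ext (U U' V : fps) i j : (forall x y, (x <= i)%N -> (y <= j)%N -> U x y = U' x y) ->
  (U * V) i j = (U' * V) i j.
Proof.
move=> H; rewrite !coefM; apply: eq_bigr => a _; apply: eq_bigr => b _.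
by rewrite H // -ltnS.
Qed.

Lemma coefM_ext2 (U U' V V' : fps) i j :
  (forall x y, (x <= i)%N -> (y <= j)%N -> U x y = U' x y) ->
  (forall x y, (x <= i)%N -> (y <= j)%N -> V x y = V' x y) ->
  (U * V) i j = (U' * V') i j.
Proof.
move=> H1 H2; rewrite !coefM; apply: eq_bigr => a _; apply: eq_bigr => b _.
have ai : (a <= i)%N by rewrite -ltnS.
have bj : (b <= j)%N by rewrite -ltnS.
by rewrite H1 // H2 // ?leq_subr.
Qed.

Lemma fcompM (F G P Q : fps) : ordge P 1 -> ordge Q 1 ->
  fcomp (F * G) P Q = fcomp F P Q * fcomp G P Q.
Proof.
move=> HP HQ; apply: fpsE => i j.
set M := (i + j)%N.
pose W a b := (P ^+ a * Q ^+ b) i j.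
pose U := \sum_(a < M.+1) \sum_(b < M.+1) fpsC (F a b) * (P ^+ a * Q ^+ b).
pose V := \sum_(a < M.+1) \sum_(b < M.+1) fpsC (G a b) * (P ^+ a * Q ^+ b).
have HU : forall (H : fps) x y, (x + y <= M)%N ->
    fcomp H P Q x y = (\sum_(a < M.+1) \sum_(b < M.+1) fpsC (H a b) * (P ^+ a * Q ^+ b)) x y.
  move=> H x y xy; rewrite (@fcompE H P Q x y M.+1 HP HQ) ?coef_sum; last by lia.
  by apply: eq_bigr => a _; rewrite coef_sum; apply: eq_bigr => b _; rewrite coefCM.
have -> : (fcomp F P Q * fcomp G P Q) i j = (U * V) i j.
  by apply: coefM_ext2 => x y xi yj; rewrite HU //; rewrite /M; lia.
have -> : U * V = \sum_(a < M.+1) \sum_(b < M.+1) \sum_(c < M.+1) \sum_(d < M.+1)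
     fpsC (F a b * G c d) * (P ^+ (a + c) * Q ^+ (b + d)).
  rewrite /U /V big_distrl; apply: eq_bigr => a _; rewrite big_distrl.
  apply: eq_bigr => b _; rewrite big_distrr; apply: eq_bigr => c _.
  rewrite big_distrr; apply: eq_bigr => d _.
  by rewrite /= fpsC_mul !exprD; ring.
rewrite !coef_sum.
under eq_bigr => a _ do (rewrite coef_sum; under eq_bigr => b _ do
   (rewrite coef_sum; under eq_bigr => c _ do (rewrite coef_sum; under eq_bigr => d _ do rewrite coefCM))).
rewrite (@fcompE (F * G) P Q i j M.+1 HP HQ) //.
transitivity (\sum_(al < M.+1) \sum_(a < al.+1) (fun a c => \sum_(be < M.+1) \sum_(b < be.+1)
    F a b * G c (be - b)%N * W (a + c)%N be) a (al - a)%N).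
  apply: eq_bigr => al _.
  rewrite (eq_bigr (fun be : 'I_M.+1 => \sum_(a < al.+1) \sum_(b < be.+1)
    F a b * G (al - a)%N (be - b)%N * W al be)); last first.
    by move=> be _; rewrite coefM mulr_suml; apply: eq_bigr => a _; rewrite mulr_suml.
  rewrite exchange_big; apply: eq_bigr => a _; apply: eq_bigr => be _; apply: eq_bigr => b _.
  by rewrite subnKC // -ltnS.
rewrite (tri0 (fun a c => \sum_(be < M.+1) \sum_(b < be.+1) F a b * G c (be - b)%N * W (a + c)%N be)).
apply: eq_bigr => a _.
rewrite -(@sum_trunc _ (M - a).+1 M.+1 (fun c => \sum_(be < M.+1) \sum_(b < be.+1)
   F a b * G c (be - b)%N * W (a + c)%N be)); last first.
- move=> c ac _; apply: big1 => be _; apply: big1 => b _.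
  rewrite /W (@ordgeW2 P Q _ _ HP HQ) ?mulr0 //; move: ac; rewrite /M; lia.
- by rewrite /M; lia.
rewrite [RHS]exchange_big; apply: eq_bigr => c _.
transitivity (\sum_(be < M.+1) \sum_(b < be.+1)
   (fun b d => F a b * G c d * W (a + c)%N (b + d)%N) b (be - b)%N).
  by apply: eq_bigr => be _; apply: eq_bigr => b _; rewrite subnKC // -ltnS.
rewrite (tri0 (fun b d => F a b * G c d * W (a + c)%N (b + d)%N)); apply: eq_bigr => b _.
rewrite -(@sum_trunc _ (M - b).+1 M.+1 (fun d => F a b * G c d * W (a + c)%N (b + d)%N)) //.
- by rewrite /M; lia.
- move=> d bd _; rewrite /W (@ordgeW2 P Q _ _ HP HQ) ?mulr0 //.
  by have := ltn_ord b; move: bd; rewrite /M; lia.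
Qed.

Lemma fcomp_h (P Q : fps) : ordge P 1 -> ordge Q 1 -> fcomp (x1 * x2) P Q = P * Q.
Proof.
move=> HP HQ; apply: fpsE => i j.
rewrite (@fcompE _ P Q i j (i + j).+2 HP HQ) //.
have h1 : (1 < (i + j).+2)%N by [].
rewrite (bigD1 (Ordinal h1)) //= [X in _ + X]big1 ?addr0; last first.
  move=> [[|[|a']] ha] /eqP aN1; apply: big1 => b _; rewrite coefx1M /=.
  - by rewrite mul0r.
  - by exfalso; apply: aN1; apply: val_inj.
  - by rewrite /xi2 /= mul0r.
rewrite (bigD1 (Ordinal h1)) //= [X in _ + X]big1 ?addr0; last first.
  move=> [[|[|b']] hb] /eqP bN1; rewrite coefx1M /xi2 /=.
  - by rewrite mul0r.
  - by exfalso; apply: bN1; apply: val_inj.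
  - by rewrite mul0r.
by rewrite coefx1M /xi2 /= mul1r !expr1.
Qed.

Lemma ordge_fcomp (F P Q : fps) : F 0%N 0%N = 0 -> ordge (fcomp F P Q) 1.
Proof.
move=> F0 i j ij; have [-> ->] : i = 0%N /\ j = 0%N by lia.
by rewrite /fcomp !big_ord1 F0 mul0r.
Qed.

Lemma miter_h (phi : fmap K) p : phi.1 0%N 0%N = 0 -> phi.2 0%N 0%N = 0 ->
  fcomp (x1 * x2) phi.1 phi.2 = x1 * x2 ->
  [/\ (miter p phi).1 * (miter p phi).2 = x1 * x2,
      ordge (miter p phi).1 1 & ordge (miter p phi).2 1].
Proof.
move=> h1 h2 hh.
have Hphi : phi.1 * phi.2 = x1 * x2.
  by rewrite -fcomp_h // (ordge_fcomp _ _ h1) || (rewrite -hh; symmetry; apply: fcomp_h;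
     move=> i j ij; have [-> ->] : i = 0%N /\ j = 0%N by lia).
elim: p => [|p [IH1 IH2 IH3]]; first by split; [| exact: ordge_x1 | exact: ordge_x2].
rewrite /miter iterS -/(miter p phi) /mcomp /=.
split; [| exact: ordge_fcomp | exact: ordge_fcomp].
by rewrite -fcompM // Hphi fcomp_h.
Qed.

End S8.

Section S9.
Variable K : numFieldType.
Local Notation fps := (Defs.fps K).

Lemma min_coef (F : fps) : F <> 0 -> exists d i, [/\ (i <= d)%N, F i (d - i)%N != 0,
   (forall i' j', (i' + j' < d)%N -> F i' j' = 0) &
   (forall i', (i' < i)%N -> F i' (d - i')%N = 0)].
Proof.
move=> HF.
pose P d := [exists i : 'I_d.+1, F i (d - i)%N != 0].
have Hex : exists d, P d.
  apply: NNPP => H; apply: HF; apply: fpsE => i j; apply/eqP; apply: contraT => Hij.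
  exfalso; apply: H; exists (i + j)%N; apply/existsP.
  have hi : (i < (i + j).+1)%N by rewrite ltnS leq_addr.
  by exists (Ordinal hi); rewrite /= addKn.
have [d Pd Hmin] := find_ex_minn Hex.
pose P' i := (i <= d)%N && (F i (d - i)%N != 0).
have Hex' : exists i, P' i.
  by case/existsP: Pd => i Hi; exists (nat_of_ord i); rewrite /P' Hi -ltnS ltn_ord.
have [i /andP [id Hi] Hmin'] := find_ex_minn Hex'.
exists d, i; split => //.
  move=> i' j' ij; apply/eqP; apply: contraT => H.
  have : P (i' + j')%N.
    apply/existsP.
    have hi : (i' < (i' + j').+1)%N by rewrite ltnS leq_addr.
    by exists (Ordinal hi); rewrite /= addKn.
  by move/Hmin; rewrite leqNgt ij.
move=> i' ii'; apply/eqP; apply: contraT => H.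
have : P' i' by rewrite /P' H andbT; apply: leq_trans id; exact: ltnW.
by move/Hmin'; rewrite leqNgt ii'.
Qed.

Lemma fps_domain (F G : fps) : F * G = 0 -> F = 0 \/ G = 0.
Proof.
move=> FG; case: (classic (F = 0)) => HF; first by left.
case: (classic (G = 0)) => HG; first by right.
exfalso.
have [dF [iF [iFd F0 FminD FminI]]] := min_coef HF.
have [dG [iG [iGd G0 GminD GminI]]] := min_coef HG.
set jF := (dF - iF)%N in F0 FminI *; set jG := (dG - iG)%N in G0 GminI *.
have Z : forall a b, (a <= iF + iG)%N -> (b <= jF + jG)%N -> (a != iF) || (b != jF) ->
    F a b * G (iF + iG - a)%N (jF + jG - b)%N = 0.
  move=> a b aI bJ ab.
  have [abd|abd] := ltnP (a + b) dF; first by rewrite FminD ?mul0r.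
  rewrite leq_eqVlt in abd; case/orP: abd => [/eqP abd|abd].
    have [ai|ai] := ltnP a iF.
      by rewrite (_ : b = dF - a)%N ?FminI ?mul0r //; lia.
    rewrite leq_eqVlt in ai; case/orP: ai => [/eqP ai|ai].
      by exfalso; move: ab; rewrite -ai eqxx /= => /eqP; apply; rewrite /jF; lia.
    rewrite (_ : (jF + jG - b)%N = dG - (iF + iG - a))%N; last by rewrite /jF /jG; lia.
    by rewrite GminI ?mulr0 //; lia.
  by rewrite GminD ?mulr0 //; rewrite /jF /jG; lia.
have : (F * G) (iF + iG)%N (jF + jG)%N = F iF jF * G iG jG.
  rewrite coefM.
  have hI : (iF < (iF + iG).+1)%N by lia.
  have hJ : (jF < (jF + jG).+1)%N by lia.
  rewrite (bigD1 (Ordinal hI)) //= [X in _ + X]big1 ?addr0; last first.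
    move=> a /eqP aN; apply: big1 => b _; apply: Z.
    - by rewrite -ltnS.
    - by rewrite -ltnS.
    by apply/orP; left; apply/eqP => E; apply: aN; apply: val_inj.
  rewrite (bigD1 (Ordinal hJ)) //= [X in _ + X]big1 ?addr0; last first.
    move=> b /eqP bN; apply: Z.
    - exact: leq_addr.
    - by rewrite -ltnS.
    by apply/orP; right; apply/eqP => E; apply: bN; apply: val_inj.
  by rewrite addKn addKn.
rewrite FG coef0 => /esym /eqP; apply/negP; exact: mulf_neq0.
Qed.

End S9.

Section S10.
Variable K : numFieldType.
Local Notation fps := (Defs.fps K).
Local Notation x1 := (xi1 K).
Local Notation x2 := (xi2 K).

Lemma log1p_divE (G : fps) :
  log1p_div G = fsum (fun m => fpsC ((-1) ^+ m / (m.+1)%:R) * G ^+ m).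
Proof. by apply: fpsE => i j; apply: eq_bigr => m _; rewrite coefCM fpowE. Qed.

Lemma fpsC_opp c : fpsC (- c) = - fpsC c :> fps.
Proof.
apply: fpsE => i j; rewrite coefN !coefC.
by case: ((i == 0%N) && (j == 0%N)); rewrite ?oppr0.
Qed.

Lemma fpsC_exp c m : fpsC (c ^+ m) = fpsC c ^+ m :> fps.
Proof. by elim: m => [|m IH]; rewrite ?expr0 ?fpsC1 // !exprS fpsC_mul IH. Qed.

Lemma fsum_pow0 (c : nat -> K) : fsum (fun n => fpsC (c n) * (0 : fps) ^+ n) = fpsC (c 0%N).
Proof.
apply: fpsE => i j; rewrite /fsum big_ord_recl big1 ?addr0.
  by rewrite expr0 mulr1.
by move=> n _; rewrite /bump /= expr0n /= mulr0.
Qed.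

Lemma zero_of_derivs (G : fps) : d1 G = 0 -> d2 G = 0 -> G 0%N 0%N = 0 -> G = 0.
Proof.
move=> h1 h2 h0; apply: fpsE => [[|i]] j.
  case: j => [|j] //.
  have := congr1 (fun H => H 0%N j) h2; rewrite /d2 coef0 => /eqP.
  by rewrite mulrn_eq0 /= => /eqP.
have := congr1 (fun H => H i j) h1; rewrite /d1 coef0 => /eqP.
by rewrite mulrn_eq0 /= => /eqP.
Qed.

Lemma fact_scal n : ((n.+1)`!%:R : K)^-1 * (n.+1)%:R = (n`!%:R)^-1.
Proof. by rewrite factS natrM invfM mulrAC mulVf ?mul1r // pnatr_eq0. Qed.

Lemma scal_pow (F : fps) c n : fpsC c * (F *+ n) = fpsC (c * n%:R) * F.
Proof. by rewrite fpsC_natmul mulrA -fpsC_mul. Qed.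

Lemma key_identity (e : fps) : ordge e 1 ->
  fsum (fun n => fpsC (((n.+1)`!%:R)^-1) * e ^+ n) *
  log1p_div (e * fsum (fun n => fpsC (((n.+1)`!%:R)^-1) * e ^+ n)) = 1.
Proof.
move=> He.
have Sphi : summable (fun n => fpsC (((n.+1)`!%:R)^-1) * e ^+ n).
  move=> n; rewrite -[n]add0n; apply: ordgeM; first exact: ordge0.
  by have := @ordgeX _ e 1 n He; rewrite mul1n.
have Hphi := sums_fsum Sphi.
move: Hphi; set phi := fsum _ => Hphi.
set u := e * phi.
pose Ex n := fpsC ((n`!%:R)^-1) * e ^+ n.
have SEx : sums Ex (1 + u).
  have H := sumsMl e Hphi.
  have H2 : sums (fun n => Ex n.+1) u by apply: (sums_ext _ H) => n; rewrite /Ex exprS; ring.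
  have := sums_shift H2.
  by rewrite /Ex (_ : 0`! = 1)%N // invr1 fpsC1 expr0 mulr1.
have Hu1 : ordge u 1 by rewrite -[1%N]addn0; apply: ordgeM.
have Du : forall D, isder D -> D u = D e * (1 + u).
  move=> D HD.
  have S1 := sums_unshift (derS HD SEx).
  have S2 := sumsMl (D e) SEx.
  have E : forall n, D (Ex n.+1) = D e * Ex n.
    move=> n; rewrite /Ex (derCM HD) (derX HD) scal_pow fact_scal; ring.
  have := sums_unique (sums_ext E S1) S2.
  by rewrite (derD HD) (der1 HD) add0r /Ex (_ : 0`! = 1)%N // invr1 fpsC1 expr0 mulr1 (der1 HD) subr0.
set Lu := log1p_div u.
pose Lf m := fpsC ((-1) ^+ m / (m.+1)%:R) * u ^+ m.
have SL : summable Lf.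
  move=> m; rewrite -[m]add0n; apply: ordgeM; first exact: ordge0.
  by have := @ordgeX _ u 1 m Hu1; rewrite mul1n.
have HLu : sums Lf Lu by rewrite /Lu log1p_divE; exact: sums_fsum.
have Hl : forall D, isder D -> D (u * Lu) = D e.
  move=> D HD.
  have S1 := derS HD (sumsMl u HLu).
  have E : forall m, D (u * Lf m) = ((- u) ^+ m - (- u) ^+ m.+1) * D e.
    move=> m; rewrite /Lf mulrCA (derCM HD) -exprS.
    rewrite (derX HD) (Du D HD) scal_pow.
    rewrite (_ : (-1) ^+ m / (m.+1)%:R * (m.+1)%:R = (-1) ^+ m); last first.
      by rewrite -mulrA mulVf ?mulr1 // pnatr_eq0.
    rewrite fpsC_exp fpsC_opp fpsC1 (exprNn u m) (exprNn u m.+1) !exprS; ring.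
  have T := sumsMr (D e) (telescope (ordgeN Hu1)).
  have := sums_unique (sums_ext E S1) T.
  by rewrite mul1r.
have Hle : u * Lu = e.
  apply/eqP; rewrite -subr_eq0; apply/eqP; apply: zero_of_derivs.
  - by rewrite d1B (Hl _ (isder_d1 K)) subrr.
  - by rewrite d2B (Hl _ (isder_d2 K)) subrr.
  - by rewrite coefB (@ordgeM _ u Lu 1 0 Hu1 (ordge0 Lu) 0 0) // (He 0%N 0%N) // subr0.
have : e * (phi * Lu - 1) = 0 by rewrite mulrBr mulr1 mulrA Hle subrr.
case/fps_domain => [e0|]; last by move/eqP; rewrite subr_eq0 => /eqP.
rewrite /Lu /u /phi e0 mul0r log1p_divE.
rewrite (fsum_pow0 (fun n => ((n.+1)`!%:R)^-1)).
rewrite (fsum_pow0 (fun m => (-1) ^+ m / (m.+1)%:R)).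
by rewrite /= expr0 div1r invr1 fpsC1 mulr1.
Qed.

End S10.

Section S11.
Variable K : numFieldType.
Local Notation fps := (Defs.fps K).
Local Notation x1 := (xi1 K).
Local Notation x2 := (xi2 K).

Fixpoint Pf (a : fps) n := if n is n'.+1 then a * (Pf a n' + Eder (Pf a n')) else 1.
Fixpoint Sf (a : fps) n := if n is n'.+1 then
  Eder a * Sf a n' + (Eder a ^+ n' + a * Sf a n') + Eder (Eder a ^+ n' + a * Sf a n') else 0.
Fixpoint Bf (a u V : fps) m := if m is m'.+1 then V * u ^+ m' + (u + a * V) * Bf a u V m' else 0.

Lemma PfE (a : fps) n : Pf a n.+1 = a * (Pf a n + Eder (Pf a n)). Proof. by []. Qed.
Lemma SfE (a : fps) n : Sf a n.+1 =
  Eder a * Sf a n + (Eder a ^+ n + a * Sf a n) + Eder (Eder a ^+ n + a * Sf a n). Proof. by []. Qed.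
Lemma BfE1 (a u V : fps) m : Bf a u V m.+1 = V * u ^+ m + (u + a * V) * Bf a u V m. Proof. by []. Qed.

Lemma PfS (a : fps) n : Pf a n.+1 = a * (Eder a ^+ n + a * Sf a n).
Proof.
have HE := (@isder_E K).
elim: n => [|n IH]; first by rewrite PfE /= (der1 HE); ring.
rewrite PfE IH (derM HE) SfE exprS; ring.
Qed.

Lemma ordge_Pf (a : fps) n : ordge a 1 -> ordge (Pf a n) n.
Proof.
move=> Ha; elim: n => [|n IH]; first exact: ordge0.
by rewrite PfE -add1n; apply: ordgeM => //; apply: ordgeD => //; apply: ordge_E.
Qed.

Lemma ordge_Sf (a : fps) n : ordge a 1 -> ordge (Sf a n.+1) n.
Proof.
move=> Ha; have He := ordge_E Ha.
have HR : forall n, ordge (Sf a n.+1) n -> ordge (Eder a ^+ n.+1 + a * Sf a n.+1) n.+1.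
  move=> m Hm; apply: ordgeD.
    by have := @ordgeX _ _ 1 m.+1 He; rewrite mul1n.
  by rewrite -add1n; apply: ordgeM.
elim: n => [|n IH]; first exact: ordge0.
rewrite SfE.
apply: ordgeD; first apply: ordgeD.
- by rewrite -add1n; apply: ordgeM.
- exact: HR.
- by apply: ordge_E; apply: HR.
Qed.

Lemma BfE (a u V : fps) m : (u + a * V) ^+ m = u ^+ m + a * Bf a u V m.
Proof.
elim: m => [|m IH]; first by rewrite /= !expr0; ring.
by rewrite exprS IH BfE1 exprS; ring.
Qed.

Lemma ordge_Bf (a u V : fps) m : ordge u 1 -> ordge (u + a * V) 1 -> ordge (Bf a u V m.+1) m.
Proof.
move=> Hu HuV; elim: m => [|m IH]; first exact: ordge0.
rewrite BfE1; apply: ordgeD.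
  rewrite -[m.+1]add0n; apply: ordgeM; first exact: ordge0.
  by have := @ordgeX _ _ 1 m.+1 Hu; rewrite mul1n.
by rewrite -add1n; apply: ordgeM.
Qed.

Lemma core (a f : fps) : ordge a 1 ->
  lie_exp (x1 * a, - (x2 * a)) x1 = x1 + x1 * f ->
  exists w v q, [/\ f = a * w, w * v = 1 & f * log1p_div (Eder f) = a + a ^+ 2 * q].
Proof.
move=> Ha Hf.
have HE := (@isder_E K).
set X : vfield K := (x1 * a, - (x2 * a)).
have HX : vanishing_linear_part X.
  rewrite /X; repeat split; rewrite /= ?coefN ?coefx1M ?coefx2M ?(Ha 0%N 0%N) ?oppr0 //.
have lieX : forall F, lie X F = a * Eder F by move=> F; rewrite lieE EderE /=; ring.
have iterP : forall n, iter n (lie X) x1 = x1 * Pf a n.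
  elim=> [|n IH]; first by rewrite /= mulr1.
  by rewrite iterS IH lieX (derM HE) Ex1 /=; ring.
set e := Eder a.
have He : ordge e 1 := ordge_E Ha.
pose Q n := fpsC ((n`!%:R)^-1) * Pf a n.
have SQ : summable Q.
  move=> n; rewrite -[n]add0n; apply: ordgeM; first exact: ordge0.
  exact: ordge_Pf.
have E1 : lie_exp X x1 = x1 * fsum Q.
  rewrite lie_expE; apply: (sums_unique (sums_fsum (summable_ex x1 HX))).
  apply: (sums_ext _ (sumsMl x1 (sums_fsum SQ))) => n.
  by rewrite /ex iterP /Q; ring.
have E2 : fsum Q = 1 + f by apply: x1_cancel; rewrite -E1 Hf mulrDr mulr1.
have SQ1 : sums (fun n => Q n.+1) f.
  have := sums_unshift (sums_fsum SQ); rewrite E2 => H; apply: (sums_eq _ H).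
  by rewrite /Q /= (_ : 0`! = 1)%N // invr1 fpsC1; ring.
pose c n : K := ((n.+1)`!%:R)^-1.
have Sphi : summable (fun n => fpsC (c n) * e ^+ n).
  move=> n; rewrite -[n]add0n; apply: ordgeM; first exact: ordge0.
  by have := @ordgeX _ e 1 n He; rewrite mul1n.
have Hphi := sums_fsum Sphi.
pose tau n := fpsC (c n) * Sf a n.
have Stau1 : summable (fun n => tau n.+1).
  move=> n; rewrite -[n]add0n; apply: ordgeM; first exact: ordge0.
  exact: ordge_Sf.
have Stau : sums tau (fsum (fun n => tau n.+1)).
  have := sums_shift (sums_fsum Stau1).
  have -> : tau 0%N = 0 by rewrite /tau /= mulr0.
  by rewrite add0r.
have Ef : f = a * (fsum (fun n => fpsC (c n) * e ^+ n) + a * fsum (fun n => tau n.+1)).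
  have S2 := sumsD (sumsMl a Hphi) (sumsMl (a ^+ 2) Stau).
  have S3 : sums (fun n => Q n.+1) (a * fsum (fun n => fpsC (c n) * e ^+ n) +
                     a ^+ 2 * fsum (fun n => tau n.+1)).
    by apply: (sums_ext _ S2) => n; rewrite /Q PfS /tau /c; ring.
  by rewrite (sums_unique SQ1 S3); ring.
move: Ef Hphi Sphi.
set phi := fsum (fun n => fpsC (c n) * e ^+ n).
set T := fsum (fun n => tau n.+1).
move=> Ef Hphi Sphi.
have key : phi * log1p_div (e * phi) = 1 by apply: key_identity.
set w := phi + a * T.
have w0 : w 0%N 0%N = 1.
  rewrite /w coefD (@ordgeM _ a T 1 0 Ha (ordge0 T) 0 0) // addr0.
  by rewrite /phi /fsum big_ord1 coefCM expr0 coef1 /c /= (_ : 1`! = 1)%N // invr1 mulr1.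
have [v Hv] := fps_inv w0.
set u := e * phi.
set V := e * T + Eder w.
have Ef' : Eder f = u + a * V by rewrite Ef (derM HE) /u /V /w /e; ring.
have Hu1 : ordge u 1 by rewrite -[1%N]addn0; apply: ordgeM.
have HuV : ordge (u + a * V) 1.
  apply: ordgeD => //; rewrite -[1%N]addn0; apply: ordgeM => //; exact: ordge0.
pose c' m : K := (-1) ^+ m / (m.+1)%:R.
pose beta m := fpsC (c' m) * Bf a u V m.
have Sbeta1 : summable (fun m => beta m.+1).
  move=> m; rewrite -[m]add0n; apply: ordgeM; first exact: ordge0.
  exact: ordge_Bf.
have Sbeta : sums beta (fsum (fun m => beta m.+1)).
  have := sums_shift (sums_fsum Sbeta1).
  have -> : beta 0%N = 0 by rewrite /beta /= mulr0.
  by rewrite add0r.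
have SLu : summable (fun m => fpsC (c' m) * u ^+ m).
  move=> m; rewrite -[m]add0n; apply: ordgeM; first exact: ordge0.
  by have := @ordgeX _ u 1 m Hu1; rewrite mul1n.
have SLf : summable (fun m => fpsC (c' m) * (u + a * V) ^+ m).
  move=> m; rewrite -[m]add0n; apply: ordgeM; first exact: ordge0.
  by have := @ordgeX _ _ 1 m HuV; rewrite mul1n.
have Hlog : log1p_div (Eder f) = log1p_div u + a * fsum (fun m => beta m.+1).
  rewrite Ef' !log1p_divE; symmetry; apply: summable_sums => //.
  apply: (sums_ext _ (sumsD (sums_fsum SLu) (sumsMl a Sbeta))) => m.
  by rewrite /beta BfE; ring.
exists w, v, (T * log1p_div u + phi * fsum (fun m => beta m.+1) + a * T * fsum (fun m => beta m.+1)).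
split => //.
rewrite Hlog Ef.
have -> : a * w * (log1p_div u + a * fsum (fun m => beta m.+1)) =
   a * (phi * log1p_div u) + a ^+ 2 * (T * log1p_div u + phi * fsum (fun m => beta m.+1) +
     a * T * fsum (fun m => beta m.+1)) by rewrite /w; ring.
by rewrite key mulr1.
Qed.

End S11.

Theorem mainTheorem17 (phi : fmap C) (lam : C) (p : nat) (X : vfield C)
    (f : fps C) (s : nat) :
  convergent phi.1 -> convergent phi.2 ->
  phi.1 0%N 0%N = 0 -> phi.2 0%N 0%N = 0 ->
  (lam != 0 /\ linpart phi lam 0 0 lam^-1) \/ linpart phi 0 (-1) (-1) 0 ->
  (0 < p)%N ->
  linpart (miter p phi) 1 0 0 1 ->
  mcomp (mcomp (@msigma C) (mcomp phi (@msigma C))) phi = @midm C ->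
  fcomp hfi phi.1 phi.2 = hfi ->
  vanishing_linear_part X ->
  fexp X = miter p phi ->
  fmul (@xi1 C) f = fsub (miter p phi).1 (@xi1 C) ->
  fdvd (fpow hfi s) f -> ~ fdvd (fpow hfi s.+1) f ->
  exists g : fps C,
    fmul (fpow hfi s) (fsub X.1 (fmul (fmul f (log1p_div (Eder f))) (Efield C).1))
      = fmul (fmul g (fpow f 2)) (Efield C).1 /\
    fmul (fpow hfi s) (fsub X.2 (fmul (fmul f (log1p_div (Eder f))) (Efield C).2))
      = fmul (fmul g (fpow f 2)) (Efield C).2.
Proof.
move=> _ _ h1 h2 _ _ _ _ hh HX Hexp Hf _ _.
have [Hprod _ _] := @miter_h C phi p h1 h2 hh.
have E1 : lie_exp X (xi1 C) = (miter p phi).1 by rewrite -Hexp.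
have E2 : lie_exp X (xi2 C) = (miter p phi).2 by rewrite -Hexp.
have Hh : lie_exp X (xi1 C * xi2 C) = xi1 C * xi2 C by rewrite exp_mul // E1 E2 Hprod.
have H0 := lie_h0 HX Hh.
have [a [Ha HXa]] := X_decomp HX H0.
have Hf2 : xi1 C * f = (miter p phi).1 - xi1 C := Hf.
have Hf' : lie_exp (xi1 C * a, - (xi2 C * a)) (xi1 C) = xi1 C + xi1 C * f.
  by rewrite -HXa E1 Hf2; ring.
have [w [v [q [Efw Hv Hlog]]]] := core Ha Hf'.
pose g := - (xi1 C * xi2 C) ^+ s * q * v ^+ 2.
exists g; rewrite !fpowE; split.
  have E : (xi1 C * xi2 C) ^+ s * (X.1 - f * log1p_div (Eder f) * xi1 C) = g * f ^+ 2 * xi1 C.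
    rewrite HXa /= Hlog Efw /g.
    transitivity (- (xi1 C * xi2 C) ^+ s * q * a ^+ 2 * xi1 C * (w * v) ^+ 2).
      by rewrite Hv expr1n; ring.
    by ring.
  exact: E.
have E : (xi1 C * xi2 C) ^+ s * (X.2 - f * log1p_div (Eder f) * (- xi2 C)) = g * f ^+ 2 * (- xi2 C).
  rewrite HXa /= Hlog Efw /g.
  transitivity ((xi1 C * xi2 C) ^+ s * q * a ^+ 2 * xi2 C * (w * v) ^+ 2).
    by rewrite Hv expr1n; ring.
  by ring.
exact: E.
Qed.
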